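(* In the situation of the context, assume $\mathfrak C_R \subseteq \mathfrak m^2$ and $a_1 + a_n \ge c_R$. Then $S$ has Herzog–Kunz generators $\widetilde x_1, \ldots, \widetilde x_{n+s}$ (so $S = k[[\widetilde x_1,\ldots,\widetilde x_{n+s}]]$) such that $t^{a_1}, t^{a_n}, t^{b_1}, \ldots, t^{b_s}$ are among the $\widetilde x_j$.
   Context: Let $k$ be an algebraically closed field of characteristic $0$ and let $(R,\mathfrak m)$ be a complete local noetherian domain of dimension $1$ containing $k$ with $R/\mathfrak m = k$; its normalization is $\overline R = k[[t]]$, $R\subseteq k[[t]]$ finite birational. Let $v$ be the $t$-adic valuation; for $A \subseteq k((t))$ let $v(A)=\{v(f): f\in A\setminus\{0\}\}$, and $V(T)=v(T)$ for a ring $T$. The conductor is $\mathfrak C_R=\{x\in\overline R: x\overline R\subseteq R\} = t^{c_R}\overline R$. For any such ring $T$ (with maximal ideal $\mathfrak m_T$), its Herzog–Kunz sequence is $v(\mathfrak m_T)\setminus v(\mathfrak m_T^2)$ listed increasingly, and Herzog–Kunz generators are elements of $T$ having exactly these valuations (they generate $T$ as $k[[\cdot]]$, the image of a power series ring). Let $a_1<\cdots<a_n$ be the Herzog–Kunz sequence of $R$ and $x_1,\ldots,x_n$ Herzog–Kunz generators of $R$ with $x_1 = t^{a_1}$. Let $S = R[\mathfrak C_R/x_1]$ and let $b_1<\cdots<b_s$ be the elements of $\{c_R-a_1, \ldots, c_R-1\}$ not in $V(R)$. Known facts (used as given): $S = R[t^{b_1},\ldots,t^{b_s}]$, $c_S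 = c_R - a_1$, and $\mathrm{edim}(S) = n+s$. *)

(* Defs.v *)
From mathcomp Require Import all_boot all_order all_algebra.
From Stdlib Require List.
Set Implicit Arguments. Unset Strict Implicit. Unset Printing Implicit Defensive.
Import GRing.Theory.
Local Open Scope ring_scope.

Section PS.
Variable k : fieldType.

(* elements of k[[t]] : f = \sum_n f n t^n *)
Definition ps := nat -> k.

Definition ps_cst (c : k) : ps := fun n => if n == 0%N then c else 0.
Definition ps_add (f g : ps) : ps := fun n => f n + g n.
Definition ps_opp (f : ps) : ps := fun n => - f n.
Definition ps_mul (f g : ps) : ps :=
  fun n => \sum_(i < n.+1) f i * g (n - i)%N.
Definition tpow (j : nat) : ps := fun n => if n == j then 1 else 0.

Fixpoint ps_sum (m : nat) (f : nat -> ps) : ps :=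
  match m with
  | 0%N => ps_cst 0
  | m'.+1 => ps_add (ps_sum m' f) (f m')
  end.

(* t-adic valuation: val f n  <->  f <> 0 and v(f) = n *)
Definition val (f : ps) (n : nat) : Prop :=
  f n != 0 /\ forall m, (m < n)%N -> f m = 0.

Definition vset (A : ps -> Prop) (n : nat) : Prop := exists f, A f /\ val f n.

Definition is_subring (P : ps -> Prop) : Prop :=
  P (ps_cst 1) /\
  (forall f g, P f -> P g -> P (ps_add f g)) /\
  (forall f, P f -> P (ps_opp f)) /\
  (forall f g, P f -> P g -> P (ps_mul f g)).

(* The rings R of the paper: k-subalgebras of k[[t]] (containing k) with
   nonzero conductor, i.e. containing t^c k[[t]] for some c. *)
Definition is_curve_ring (R : ps -> Prop) : Prop :=
  is_subring R /\ (forall c, R (ps_cst c)) /\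
  exists c : nat, forall f, (forall m, (m < c)%N -> f m = 0) -> R f.

Definition conductor (T : ps -> Prop) (x : ps) : Prop :=
  forall y, T (ps_mul x y).

(* maximal ideal of the local ring T: its non-units *)
Definition mideal (T : ps -> Prop) (f : ps) : Prop :=
  T f /\ ~ (exists g, T g /\ ps_mul f g = ps_cst 1).

Definition mideal_sq (T : ps -> Prop) (h : ps) : Prop :=
  exists (m : nat) (f g : nat -> ps),
    (forall i, (i < m)%N -> mideal T (f i) /\ mideal T (g i)) /\
    h = ps_sum m (fun i => ps_mul (f i) (g i)).

Definition HKseq (T : ps -> Prop) (a : seq nat) : Prop :=
  sorted ltn a /\
  forall n, n \in a <-> (vset (mideal T) n /\ ~ vset (mideal_sq T) n).

Definition HKgens (T : ps -> Prop) (xs : seq ps) : Prop :=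
  exists a, HKseq T a /\ size xs = size a /\
    forall i, (i < size a)%N -> T (nth (ps_cst 0) xs i) /\
                                 val (nth (ps_cst 0) xs i) (nth 0%N a i).

Definition adjoin (R J : ps -> Prop) (f : ps) : Prop :=
  forall P, is_subring P -> (forall g, R g -> P g) -> (forall g, J g -> P g) -> P f.

Definition div_set (C : ps -> Prop) (x : ps) (y : ps) : Prop := C (ps_mul x y).

End PS.

(* Main.v *)
Require Import Defs.
From HB Require Import structures.
From mathcomp Require Import all_boot all_order all_algebra.
From mathcomp Require Import boolp.
From mathcomp Require Import ring zify.
Set Implicit Arguments. Unset Strict Implicit. Unset Printing Implicit Defensive.
Import GRing.Theory.
Local Open Scope ring_scope.

Definition psr (k : fieldType) := ps k.
HB.instance Definition _ (k : fieldType) := Choice.copy (psr k) (nat -> k).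

Lemma ps_addA (k : fieldType) : associative (@ps_add k).
Proof. by move=> f g h; apply: funext => n; rewrite /ps_add addrA. Qed.
Lemma ps_addC (k : fieldType) : commutative (@ps_add k).
Proof. by move=> f g; apply: funext => n; rewrite /ps_add addrC. Qed.
Lemma ps_add0 (k : fieldType) : left_id (ps_cst 0) (@ps_add k).
Proof. by move=> f; apply: funext => n; rewrite /ps_add /ps_cst; case: eqP; rewrite add0r. Qed.
Lemma ps_addN (k : fieldType) : left_inverse (ps_cst 0) (@ps_opp k) (@ps_add k).
Proof. by move=> f; apply: funext => n; rewrite /ps_add /ps_opp /ps_cst addNr; case: eqP. Qed.

HB.instance Definition _ (k : fieldType) := GRing.isZmodule.Build (psr k)
  (@ps_addA k) (@ps_addC k) (@ps_add0 k) (@ps_addN k).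

Definition Pol (k : fieldType) (n : nat) (f : ps k) : {poly k} := \poly_(i < n) f i.
Lemma mulE (k : fieldType) (f g : ps k) i :
  ps_mul f g i = (Pol i.+1 f * Pol i.+1 g)`_i.
Proof.
rewrite coefM /ps_mul; apply: eq_bigr => j _.
rewrite /Pol.

rewrite !coef_poly.

rewrite ltn_ord. rewrite ltnS. rewrite leq_subr. by []. Qed.

Lemma agree (k : fieldType) (p p' q q' : {poly k}) i :
  (forall j, (j <= i)%N -> p`_j = p'`_j) -> (forall j, (j <= i)%N -> q`_j = q'`_j) ->
  (p * q)`_i = (p' * q')`_i.
Proof.
move=> hp hq; rewrite !coefM; apply: eq_bigr => j _.
rewrite hp; last by rewrite -ltnS. by rewrite hq // leq_subr.
Qed.

Lemma mulE' (k : fieldType) (f g : ps k) i n : (i < n)%N ->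
  ps_mul f g i = (Pol n f * Pol n g)`_i.
Proof.
move=> lin; rewrite mulE; apply: agree => j ji; rewrite !coef_poly ltnS ji;
  by rewrite (leq_ltn_trans ji lin).
Qed.

Lemma ps_mulA (k : fieldType) : associative (@ps_mul k).
Proof.
move=> f g h; apply: funext => i.
rewrite mulE [RHS]mulE.
transitivity ((Pol i.+1 f * (Pol i.+1 g * Pol i.+1 h))`_i).
  apply: agree => // j ji.
  rewrite coef_poly ltnS ji; apply: mulE'; by rewrite ltnS.
rewrite mulrA; apply: agree => // j ji.
rewrite coef_poly ltnS ji; symmetry; apply: mulE'; by rewrite ltnS.
Qed.

Lemma ps_mulC (k : fieldType) : commutative (@ps_mul k).
Proof. by move=> f g; apply: funext => i; rewrite !mulE mulrC. Qed.

Lemma ps_mul1 (k : fieldType) : left_id (ps_cst 1) (@ps_mul k).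
Proof.
move=> f; apply: funext => i; rewrite /ps_mul big_ord_recl /= subn0 /ps_cst /= mul1r.
by rewrite big1 ?addr0 // => j _; rewrite mul0r.
Qed.

Lemma ps_mulDl (k : fieldType) : left_distributive (@ps_mul k) (@ps_add k).
Proof.
move=> f g h; apply: funext => i; rewrite /ps_mul /ps_add -big_split /=.
by apply: eq_bigr => j _; rewrite mulrDl.
Qed.

Lemma ps_one_neq0 (k : fieldType) : (ps_cst 1 : psr k) != ps_cst 0.
Proof.
apply/eqP => /(congr1 (fun f : psr k => f 0%N)); rewrite /ps_cst /=; apply/eqP; exact: oner_neq0.
Qed.

HB.instance Definition _ (k : fieldType) := GRing.Zmodule_isComNzRing.Build (psr k)
  (@ps_mulA k) (@ps_mulC k) (@ps_mul1 k) (@ps_mulDl k) (@ps_one_neq0 k).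


Definition vanish (k : fieldType) (N : nat) (f : ps k) := forall m, (m < N)%N -> f m = 0.

Lemma addE (k : fieldType) (f g : ps k) : ps_add f g = (f : psr k) + g. Proof. by []. Qed.
Lemma mulE0 (k : fieldType) (f g : ps k) : ps_mul f g = (f : psr k) * g. Proof. by []. Qed.
Lemma oppE (k : fieldType) (f : ps k) : ps_opp f = - (f : psr k). Proof. by []. Qed.
Lemma oneE (k : fieldType) : ps_cst 1 = (1 : psr k). Proof. by []. Qed.
Lemma zeroE (k : fieldType) : ps_cst 0 = (0 : psr k). Proof. by []. Qed.
Lemma cD (k : fieldType) (f g : psr k) n : (f + g) n = f n + g n. Proof. by []. Qed.
Lemma cN (k : fieldType) (f : psr k) n : (- f) n = - f n. Proof. by []. Qed.
Lemma cB (k : fieldType) (f g : psr k) n : (f - g) n = f n - g n. Proof. by []. Qed.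
Lemma c0 (k : fieldType) n : (0 : psr k) n = 0.
Proof. by change (@ps_cst k 0 n = 0); rewrite /ps_cst; case: (n == 0%N). Qed.
Lemma c1 (k : fieldType) n : (1 : psr k) n = (n == 0%N)%:R.
Proof. by change (@ps_cst k 1 n = (n == 0%N)%:R); rewrite /ps_cst; case: (n == 0%N). Qed.
Lemma cM (k : fieldType) (f g : psr k) n : (f * g) n = \sum_(i < n.+1) f i * g (n - i)%N.
Proof. by []. Qed.
Lemma cM0 (k : fieldType) (f g : psr k) : (f * g) 0%N = f 0%N * g 0%N.
Proof. by rewrite cM big_ord1 subn0. Qed.

Lemma vanish_mul (k : fieldType) a b (f g : psr k) :
  vanish a f -> vanish b g -> vanish (a + b) (f * g).
Proof.
move=> hf hg m lt; rewrite cM; apply: big1 => i _.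
case: (ltnP i a) => ia; first by rewrite hf // mul0r.
rewrite hg ?mulr0 //; have := ltn_ord i; lia.
Qed.

Lemma vanish_mulr (k : fieldType) a (f g : psr k) : vanish a f -> vanish a (f * g).
Proof. by move=> hf; rewrite -[a]addn0; apply: vanish_mul => // m. Qed.

Lemma vanish_add (k : fieldType) a (f g : psr k) : vanish a f -> vanish a g -> vanish a (f + g).
Proof. by move=> hf hg m lt; rewrite cD hf ?hg ?addr0. Qed.
Lemma vanish_opp (k : fieldType) a (f : psr k) : vanish a f -> vanish a (- f).
Proof. by move=> hf m lt; rewrite cN hf ?oppr0. Qed.
Lemma vanish_le (k : fieldType) a b (f : psr k) : (b <= a)%N -> vanish a f -> vanish b f.
Proof. by move=> ba hf m lt; apply: hf; apply: leq_trans ba. Qed.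
Lemma vanish_exp (k : fieldType) (h : psr k) n : vanish 1 h -> vanish n (h ^+ n).
Proof.
move=> h1; elim: n => [|n IH]; first by move=> m.
rewrite exprS -add1n; exact: vanish_mul.
Qed.

Fixpoint ginv (k : fieldType) (f : ps k) (n : nat) : nat -> k :=
  match n with
  | 0%N => fun m => if m == 0%N then (f 0%N)^-1 else 0
  | n'.+1 => let p := ginv f n' in
      fun m => if m == n'.+1 then - (f 0%N)^-1 * \sum_(i < n'.+1) f i.+1 * p (n' - i)%N
               else p m
  end.

Lemma ginv_stable (k : fieldType) (f : ps k) n m : (m <= n)%N -> ginv f n m = ginv f m m.
Proof.
elim: n => [|n IH] mn; first by move: mn; rewrite leqn0 => /eqP->.
rewrite /=; case: eqP => [->|ne]; first by rewrite /= eqxx.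
apply: IH; move: mn ne; lia.
Qed.

Lemma ps_inv (k : fieldType) (f : psr k) : f 0%N != 0 -> exists g : psr k, f * g = 1.
Proof.
move=> f0; exists (fun m => ginv f m m); apply: funext => n; rewrite c1 cM.
case: n => [|n]; first by rewrite big_ord1 /= mulfV.
rewrite big_ord_recl /= subn0 eqxx mulrA mulrN mulfV // mulN1r.
rewrite addrC; apply/eqP; rewrite subr_eq0; apply/eqP; apply: eq_bigr => i _.
by rewrite /bump /= add1n subSS ginv_stable // leq_subr.
Qed.


Lemma sr1 (k : fieldType) (P : ps k -> Prop) : is_subring P -> P (1 : psr k).
Proof. by case. Qed.
Lemma srD (k : fieldType) (P : ps k -> Prop) (f g : psr k) : is_subring P -> P f -> P g -> P (f + g).
Proof. by case=> _ [h _] ??; apply: h. Qed.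
Lemma srN (k : fieldType) (P : ps k -> Prop) (f : psr k) : is_subring P -> P f -> P (- f).
Proof. by case=> _ [_ [h _]] ?; apply: h. Qed.
Lemma srM (k : fieldType) (P : ps k -> Prop) (f g : psr k) : is_subring P -> P f -> P g -> P (f * g).
Proof. by case=> _ [_ [_ h]] ??; apply: h. Qed.
Lemma srB (k : fieldType) (P : ps k -> Prop) (f g : psr k) : is_subring P -> P f -> P g -> P (f - g).
Proof. by move=> hP hf hg; apply: srD => //; apply: srN. Qed.
Lemma sr0 (k : fieldType) (P : ps k -> Prop) : is_subring P -> P (0 : psr k).
Proof. by move=> hP; rewrite -(subrr (1 : psr k)); apply: srB => //; apply: sr1. Qed.
Lemma srX (k : fieldType) (P : ps k -> Prop) (f : psr k) n : is_subring P -> P f -> P (f ^+ n).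
Proof. move=> hP hf; elim: n => [|n IH]; [exact: sr1 | rewrite exprS; exact: srM]. Qed.
Lemma srS (k : fieldType) (P : ps k -> Prop) n (F : 'I_n -> psr k) : is_subring P ->
  (forall i, P (F i)) -> P (\sum_(i < n) F i).
Proof.
move=> hP hF; elim/big_rec: _ => [|i x _ hx]; [exact: sr0 | exact: srD].
Qed.

Lemma unit_lemma (k : fieldType) (P : ps k -> Prop) (N : nat) :
  is_subring P -> (forall c, P (ps_cst c)) -> (forall f, vanish N f -> P f) ->
  forall f : psr k, P f -> f 0%N != 0 -> exists g : psr k, P g /\ f * g = 1.
Proof.
move=> hP hc hN f hf f0.
have [g0 hg0] := ps_inv f0.
pose c : psr k := ps_cst (f 0%N)^-1.
pose h : psr k := 1 - c * f.
have h1 : vanish 1 h.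
  move=> m; rewrite ltnS leqn0 => /eqP->; rewrite /h cB cM0 c1 /c /ps_cst /= mulVf //.
  by rewrite subrr.
pose q := \sum_(i < N) h ^+ i.
exists (c * q + h ^+ N * g0); split.
  have hcP : P c := hc _.
  have hh : P h by apply: srB => //; [exact: sr1 | exact: srM].
  apply: srD => //; last by apply: hN; apply: vanish_mulr; exact: vanish_exp.
  apply: srM => //; rewrite /q.
  apply: (@srS k P N (fun i : 'I_N => h ^+ i)) => // i; exact: srX.
have e1 : f * c = 1 - h by rewrite /h; ring.
have e2 := subrX1 h N.
rewrite mulrDr mulrA e1 [f * (_ * g0)]mulrCA hg0 mulr1.
rewrite -opprB mulNr -e2; ring.
Qed.

Lemma mideal0 (k : fieldType) (P : ps k -> Prop) (N : nat) :
  is_subring P -> (forall c, P (ps_cst c)) -> (forall f, vanish N f -> P f) ->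
  forall f : psr k, mideal P f -> f 0%N = 0.
Proof.
move=> hP hc hN f [hf hnu]; apply/eqP; apply/negPn/negP => f0.
have [g [hg e]] := unit_lemma hP hc hN hf f0; apply: hnu; exists g; split => //.
Qed.

Lemma mideal_of (k : fieldType) (P : ps k -> Prop) (f : psr k) : P f -> f 0%N = 0 -> mideal P f.
Proof.
move=> hf f0; split => // [[g [_ e]]].
have := congr1 (fun x : psr k => x 0%N) e; rewrite /= mulE0 oneE cM0 f0 mul0r c1 eqxx.
by move/eqP; rewrite eq_sym oner_eq0.
Qed.

Lemma ps_sumE (k : fieldType) m (F : nat -> ps k) : ps_sum m F = \sum_(i < m) (F i : psr k).
Proof. by elim: m => [|m IH]; rewrite ?big_ord0 // big_ord_recr /= addE IH. Qed.

Lemma cTM (k : fieldType) a (y : psr k) n :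
  ((tpow k a : psr k) * y) n = if (a <= n)%N then y (n - a)%N else 0.
Proof.
rewrite cM; under eq_bigr => i _ do rewrite /tpow (fun_if (fun x => x * y (n - i)%N)) mul1r mul0r.
rewrite -big_mkcond /=; case: ifP => an.
  by rewrite (big_pred1 (Ordinal (an : (a < n.+1)%N))) // => i; rewrite /= -val_eqE.
by rewrite big_pred0 // => i; apply/eqP => ia; move: (ltn_ord i); rewrite ia ltnS an.
Qed.

Lemma tpow_mul (k : fieldType) a b : (tpow k a : psr k) * tpow k b = tpow k (a + b).
Proof.
apply: funext => n; rewrite cTM /tpow; case: ifP => an; last first.
  by case: eqP => // e; move: an; rewrite e leq_addr.
by apply/esym; case: eqP => e; case: eqP => e' //; exfalso; lia.
Qed.

Lemma tpow_val (k : fieldType) v : Defs.val (tpow k v) v.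
Proof.
split; first by rewrite /tpow eqxx oner_eq0.
by move=> m mv; rewrite /tpow; case: eqP => // e; move: mv; rewrite e ltnn.
Qed.

Lemma tpow_vanish (k : fieldType) v : vanish v (tpow k v).
Proof. by move=> m mv; rewrite /tpow; case: eqP => // e; move: mv; rewrite e ltnn. Qed.

Lemma ex_val (k : fieldType) (f : ps k) m : f m != 0 -> exists2 u, (u <= m)%N & Defs.val f u.
Proof.
move=> fm; have ex : exists n, f n != 0 by exists m.
case: (ex_minnP ex) => u fu hmin; exists u; first exact: hmin.
split => // j ju; apply/eqP/negPn/negP => fj; have := hmin j fj; rewrite leqNgt ju.
done.
Qed.

Lemma vanish_iff_nval (k : fieldType) (f : ps k) b :
  (forall u, Defs.val f u -> (b <= u)%N) -> vanish b f.
Proof.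
move=> h m mb; apply/eqP/negPn/negP => fm; have [u um fu] := ex_val fm.
have := h u fu; move: mb um; lia.
Qed.

Lemma msq_vanish (k : fieldType) (T : ps k -> Prop) b :
  (forall f, mideal T f -> vanish b f) -> forall h, mideal_sq T h -> vanish (b + b) h.
Proof.
move=> hb h [m [f [g [hfg ->]]]]; rewrite ps_sumE.
elim/big_rec: _ => [|i x _ hx]; first by move=> j _; rewrite c0.
have [hf hg] := hfg i (ltn_ord i); apply: vanish_add => //; rewrite mulE0.
by apply: vanish_mul; apply: hb.
Qed.

Lemma msq_in (k : fieldType) (T : ps k -> Prop) h : is_subring T -> mideal_sq T h -> T h.
Proof.
move=> hT [m [f [g [hfg ->]]]]; rewrite ps_sumE.
elim/big_rec: _ => [|i x _ hx]; first exact: sr0.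
have [[hf _] [hg _]] := hfg i (ltn_ord i); apply: srD => //; exact: srM.
Qed.

Lemma msq_single (k : fieldType) (T : ps k -> Prop) (f g : psr k) :
  mideal T f -> mideal T g -> mideal_sq T (f * g).
Proof.
move=> hf hg; exists 1%N, (fun _ => f), (fun _ => g); split.
  by move=> i _.
by rewrite ps_sumE big_ord1.
Qed.

Lemma head_le (a : seq nat) w : sorted ltn a -> w \in a -> (head 0%N a <= w)%N.
Proof.
case: a => // x s hs; rewrite inE => /orP [/eqP->//|ws].
have := order_path_min ltn_trans hs => /allP /(_ _ ws); exact: ltnW.
Qed.

Lemma memIn (T : eqType) (x : T) (s : seq T) : x \in s -> List.In x s.
Proof. elim: s => //= y s IH; rewrite inE => /orP [/eqP->|h]; [by left|right; exact: IH]. Qed.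

Lemma In_map (T U : Type) (f : T -> U) x (s : seq T) : List.In x s -> List.In (f x) (map f s).
Proof. elim: s => //= y s IH [->|h]; [by left|right; exact: IH]. Qed.

Lemma csum (k : fieldType) m (H : 'I_m -> psr k) n : (\sum_(i < m) H i) n = \sum_(i < m) H i n.
Proof. by elim/big_rec2: _ => [|i x y _ <-]; rewrite ?c0 ?cD. Qed.

From Stdlib Require List.
Local Open Scope ring_scope.

Lemma psr_eq (k : fieldType) (x y : psr k) : (x = y :> psr k) -> (x = y :> ps k).
Proof. by []. Qed.

Theorem mainTheorem12 (k : closedFieldType) (char0 : [pchar k]%R =i pred0)
  (R : ps k -> Prop) (hR : is_curve_ring R)
  (cR : nat) (hcR : forall f, conductor R f <-> (forall m, (m < cR)%N -> f m = 0%R))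
  (a : seq nat) (ha : HKseq R a)
  (hx : exists xs : seq (ps k), HKgens R xs /\ head (ps_cst 0%R) xs = tpow k (head 0%N a))
  (hCm2 : forall f, conductor R f -> mideal_sq R f)
  (hsum : (cR <= head 0%N a + last 0%N a)%N) :
  let S := adjoin R (div_set (conductor R) (tpow k (head 0%N a))) in
  exists xs : seq (ps k),
    HKgens S xs /\
    List.In (tpow k (head 0%N a)) xs /\ List.In (tpow k (last 0%N a)) xs /\
    (forall j, (cR - head 0%N a <= j < cR)%N -> ~ vset R j -> List.In (tpow k j) xs).
Proof.
move=> S.
set a1 := head 0%N a in hx hsum S *; set an := last 0%N a in hsum *.
have [hRs [hRc _]] := hR.
have hRv : forall f, vanish cR f -> R f.
  move=> f hf; have := (proj2 (hcR f) hf) (ps_cst 1).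
  by rewrite mulE0 oneE mulr1.
have hmR : forall f : psr k, mideal R f -> f 0%N = 0 := mideal0 hRs hRc hRv.
have [hsort hmem] := ha.
have [a1a hta1] : a1 \in a /\ R (tpow k a1).
  case: hx => xs [[a'' [[hs'' hm''] [hsz hxs]]] hhead].
  have e : a'' = a.
    apply: (irr_sorted_eq ltn_trans ltnn) => // n.
    apply/idP/idP => h.
      by apply: (proj2 (hmem n)); apply: (proj1 (hm'' n)).
    by apply: (proj2 (hm'' n)); apply: (proj1 (hmem n)).
  subst a''.
  case: xs hsz hxs hhead => [|x xs] hsz hxs hhead.
    have := congr1 (fun f => f a1) hhead; rewrite /tpow eqxx /ps_cst.
    by rewrite /=; case: (a1 == 0%N) => /esym/eqP; rewrite oner_eq0.
  have sa : (0 < size a)%N by rewrite -hsz.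
  split; first by move: sa; rewrite /a1; case: (a) => // ? ? _; exact: mem_head.
  by have [] := hxs 0%N sa; move: hhead; rewrite /= => ->.
have hmin : forall w, vset (mideal R) w -> (a1 <= w)%N.
  elim/ltn_ind => w IH [f [hf vf]].
  case: (EM (vset (mideal_sq R) w)) => [[h [[m [F [G [hFG eh]]]] vh]]|nw]; last first.
    by apply: head_le => //; apply: (proj2 (hmem w)); split => //; exists f.
  have [i hi] : exists i : 'I_m, ((F i : psr k) * G i) w != 0.
    suff : [exists i : 'I_m, ((F i : psr k) * G i) w != 0] by case/existsP => i; exists i.
    rewrite -[X in is_true X]negbK; apply/negP => /existsPn hn; case: vh => hw _; move: hw.
    rewrite eh ps_sumE csum big1 ?eqxx // => i _; apply/eqP; move: (hn i); rewrite negbK.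
    by [].
  have [j hj] : exists j : 'I_w.+1, F i j * G i (w - j)%N != 0.
    suff : [exists j : 'I_w.+1, F i j * G i (w - j)%N != 0] by case/existsP => j; exists j.
    rewrite -[X in is_true X]negbK; apply/negP => /existsPn hn; move: hi; rewrite cM big1 ?eqxx // => j _.
    by apply/eqP; move: (hn j); rewrite negbK.
  move: hj; rewrite mulf_eq0 negb_or => /andP [hF hG].
  have [hFm hGm] := hFG i (ltn_ord i).
  have F0 := hmR _ hFm; have G0 := hmR _ hGm.
  have jw : (j < w)%N.
    have jw' := ltn_ord j; case: (ltnP j w) => // wj.
    have ewj : (w - j = 0)%N by lia.
    by move: hG; rewrite ewj G0 eqxx.
  have [u uj vu] := ex_val hF.
  have u0 : (0 < u)%N by case: u uj vu => // _ [] /negP; rewrite F0 eqxx.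
  have := IH u (leq_ltn_trans uj jw) (ex_intro _ (F i) (conj hFm vu)); lia.
have hvR : forall f, mideal R f -> vanish a1 f.
  by move=> f hf; apply: vanish_iff_nval => u vu; apply: hmin; exists f.
have [[f1 [hf1 vf1]] na1] := proj1 (hmem a1) a1a.
have a1pos : (0 < a1)%N.
  case: (posnP a1) => // e; case: vf1 => h _; move: h; rewrite e (hmR _ hf1) eqxx.
  by [].
have hcond : forall f, vanish cR f -> conductor R f by move=> f hf; apply/hcR.
have a1c : (a1 + a1 <= cR)%N.
  have := msq_vanish hvR (hCm2 _ (hcond _ (@tpow_vanish k cR))).
  move=> hv; case: (leqP (a1 + a1) cR) => // lt; have := hv _ lt.
  by rewrite /tpow eqxx => /eqP; rewrite oner_eq0.
have ana : an \in a.
  by move: a1a; rewrite /an; case: (a) => // x s _; exact: mem_last.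
have [_ nan] := proj1 (hmem an) ana.
have anc : (an < cR)%N.
  case: (ltnP an cR) => // ca; exfalso; apply: nan; exists (tpow k an); split; last exact: tpow_val.
  apply: hCm2; apply: hcond; apply: vanish_le ca _; exact: tpow_vanish.
set d := (cR - a1)%N.
have cRd : cR = (a1 + d)%N by rewrite /d; lia.
have a1d : (a1 <= d)%N by rewrite /d; lia.
have hSR : forall f, R f -> S f by move=> f hf P _ hP _; apply: hP.
have hJ : forall y, vanish d y -> S y.
  move=> y hy P _ _ hP; apply: hP; rewrite /div_set; apply: hcond => m mc.
  rewrite mulE0 cTM; case: ifP => // am; apply: hy; lia.
have hSs : is_subring S.
  split; first by move=> P hP _ _; exact: (proj1 hP).
  split; first by move=> f g hf hg P hP h1 h2; apply: (proj1 (proj2 hP)); [apply: hf | apply: hg].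
  split; first by move=> f hf P hP h1 h2; apply: (proj1 (proj2 (proj2 hP))); apply: hf.
  by move=> f g hf hg P hP h1 h2; apply: (proj2 (proj2 (proj2 hP))); [apply: hf | apply: hg].
have hSc : forall c, S (ps_cst c) by move=> c; apply: hSR.
have hmS : forall f : psr k, mideal S f -> f 0%N = 0 := mideal0 hSs hSc hJ.
have hdec : forall f, S f -> exists r p : psr k, R r /\ vanish d p /\ f = r + p.
  move=> f0 hf0; apply: (hf0 (fun f => exists r p : psr k, R r /\ vanish d p /\ f = r + p)).
  - split; first by exists 1, 0; split; [exact: sr1 | split; [move=> m _; exact: c0 | rewrite addr0]].
    split.
      move=> f g [r [p [hr [hp ->]]]] [r' [p' [hr' [hp' ->]]]].
      exists (r + r'), (p + p'); split; first exact: srD.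
      by split; [exact: vanish_add | rewrite addE; apply: psr_eq; ring].
    split.
      move=> f [r [p [hr [hp ->]]]]; exists (- r), (- p); split; first exact: srN.
      by split; [exact: vanish_opp | rewrite oppE; apply: psr_eq; ring].
    move=> f g [r [p [hr [hp ->]]]] [r' [p' [hr' [hp' ->]]]].
    exists (r * r'), (r * p' + p * r' + p * p'); split; first exact: srM.
    split; last by rewrite mulE0; apply: psr_eq; ring.
    apply: vanish_add; [apply: vanish_add|]; last exact: vanish_mulr.
      by rewrite mulrC; apply: vanish_mulr.
    exact: vanish_mulr.
  - by move=> g hg; exists g, 0; split => //; split; [move=> m _; exact: c0 | rewrite addr0].
  - move=> y hy; exists 0, y; split; first exact: (sr0 hRs).
    split; last by rewrite add0r.
    move=> m md; have := (proj1 (hcR _) hy) (a1 + m)%N; rewrite mulE0 cTM leq_addr addKn.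
    by apply; lia.
have d0 : (0 < d)%N by lia.
have hmSR : forall f : psr k, mideal S f -> exists r p : psr k,
    mideal R r /\ vanish d p /\ f = r + p.
  move=> f hf; have [r [p [hr [hp ef]]]] := hdec f (proj1 hf).
  exists r, p; split => //; apply: mideal_of => //.
  have := hmS _ hf; rewrite ef cD (hp 0%N d0) addr0; exact.
have S7 : forall v, (v < cR)%N -> vset (mideal_sq S) v -> vset (mideal_sq R) v.
  move=> v vc [h [[m [F [G [hFG eh]]]] vh]].
  have [DF hDF] : {DF : nat -> psr k * psr k & forall i, (i < m)%N ->
      mideal R (DF i).1 /\ vanish d (DF i).2 /\ F i = (DF i).1 + (DF i).2}.
    apply: (@choice nat (psr k * psr k) (fun i rp => (i < m)%N ->
      mideal R rp.1 /\ vanish d rp.2 /\ F i = rp.1 + rp.2)) => i; case: (ltnP i m) => im; last by exists (0, 0).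
    have [r [p hrp]] := hmSR _ (proj1 (hFG i im)); by exists (r, p).
  have [DG hDG] : {DG : nat -> psr k * psr k & forall i, (i < m)%N ->
      mideal R (DG i).1 /\ vanish d (DG i).2 /\ G i = (DG i).1 + (DG i).2}.
    apply: (@choice nat (psr k * psr k) (fun i rp => (i < m)%N ->
      mideal R rp.1 /\ vanish d rp.2 /\ G i = rp.1 + rp.2)) => i; case: (ltnP i m) => im; last by exists (0, 0).
    have [r [p hrp]] := hmSR _ (proj2 (hFG i im)); by exists (r, p).
  pose h' := ps_sum m (fun i => ps_mul (DF i).1 (DG i).1).
  have hdiff : vanish cR ((h : psr k) - (h' : psr k)).
    rewrite eh /h' !ps_sumE -sumrB.
    elim/big_rec: _ => [|i x _ hx0]; first by move=> n _; rewrite c0.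
    apply: vanish_add => //.
    have [hr [hp ->]] := hDF i (ltn_ord i); have [hr' [hp' ->]] := hDG i (ltn_ord i).
    rewrite mulE0 mulE0.
    have -> : ((DF i).1 + (DF i).2) * ((DG i).1 + (DG i).2) - (DF i).1 * (DG i).1 =
      (DF i).1 * (DG i).2 + (DG i).1 * (DF i).2 + (DF i).2 * (DG i).2 :> psr k by ring.
    apply: vanish_add; first apply: vanish_add.
    - by rewrite cRd; apply: vanish_mul => //; apply: hvR.
    - by rewrite cRd; apply: vanish_mul => //; apply: hvR.
    - apply: vanish_le (vanish_mul hp hp'); lia.
  exists h'; split.
    exists m, (fun i => (DF i).1), (fun i => (DG i).1); split => //.
    by move=> i im; split; [exact: (proj1 (hDF i im)) | exact: (proj1 (hDG i im))].
  have eq_low : forall n, (n < cR)%N -> h' n = h n.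
    by move=> n nc; have := hdiff _ nc; rewrite cB => /eqP; rewrite subr_eq0 => /eqP.
  case: vh => hv hlow; split; first by rewrite eq_low.
  by move=> n nv; rewrite eq_low ?hlow //; lia.
have bnd : forall v, vset (mideal S) v -> ~ vset (mideal_sq S) v -> (v < cR)%N.
  move=> v _ nv; case: (ltnP v cR) => // cv; exfalso; apply: nv.
  exists (tpow k v); split; last exact: tpow_val.
  have -> : tpow k v = (tpow k a1 : psr k) * tpow k (v - a1) by rewrite tpow_mul; congr tpow; lia.
  apply: msq_single; apply: mideal_of.
  - exact: hSR.
  - by rewrite /tpow; case: eqP => // e; move: a1pos; rewrite -e.
  - by apply: hJ; apply: vanish_le (@tpow_vanish k (v - a1)); lia.
  - by rewrite /tpow; case: eqP => // e; exfalso; lia.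
pose Vm v := vset (mideal S) v /\ ~ vset (mideal_sq S) v.
have tgt : forall v, S (tpow k v) -> (0 < v)%N -> (v < cR)%N ->
    ~ vset (mideal_sq R) v -> Vm v.
  move=> v hSv v0 vc nv; split.
    exists (tpow k v); split; last exact: tpow_val.
    apply: mideal_of => //; rewrite /tpow; case: eqP => // e; move: v0; rewrite -e.
    by [].
  by move/(S7 _ vc).
pose a' := [seq v <- iota 0 cR | `[< Vm v >]].
have ha' : forall v, v \in a' <-> Vm v.
  move=> v; rewrite mem_filter mem_iota add0n; split.
    by case/andP => /asboolP.
  by move=> hv; apply/andP; split; [apply/asboolP | apply: (bnd _ (proj1 hv) (proj2 hv))].
have [W hW] : {W : nat -> ps k & forall v, Vm v -> mideal S (W v) /\ Defs.val (W v) v}.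
  apply: (@choice nat (ps k) (fun v f => Vm v -> mideal S f /\ Defs.val f v)) => v.
  case: (EM (Vm v)) => [[[f hf] _]|nv]; first by exists f.
  by exists (ps_cst 0).
pose Fx v := if `[< S (tpow k v) >] then tpow k v else W v.
have inL : forall v, Vm v -> S (tpow k v) -> List.In (tpow k v) (map Fx a').
  move=> v hv hSv; have -> : tpow k v = Fx v by rewrite /Fx; case: asboolP.
  by apply: In_map; apply: memIn; apply/ha'.
exists (map Fx a'); split.
  exists a'; split.
    split; first by apply: sorted_filter; [exact: ltn_trans | exact: iota_ltn_sorted].
    exact: ha'.
  split; first by rewrite size_map.
  move=> i hi; rewrite (nth_map 0%N) //.
  have hv : Vm (nth 0%N a' i) by apply/ha'; exact: mem_nth.
  rewrite /Fx; case: asboolP => [hS|_]; first by split => //; exact: tpow_val.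
  by have [[hs _] hv'] := hW _ hv.
have ad : (d <= an)%N by rewrite /d; lia.
split.
  apply: inL; last exact: hSR.
  by apply: tgt => //; [exact: hSR | lia].
split.
  have hSan : S (tpow k an) by apply: hJ; apply: vanish_le (@tpow_vanish k an).
  by apply: inL => //; apply: tgt => //; lia.
move=> j /andP [dj jc] nj.
have hSj : S (tpow k j) by apply: hJ; apply: vanish_le (@tpow_vanish k j).
apply: inL => //; apply: tgt => //; first lia.
move=> [h [hh vh]]; apply: nj; exists h; split => //; exact: msq_in hRs hh.
Qed.
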